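(* Let $n\ge 1$ and $k\ge 3$ be integers and set $p:=k-2>0$. Let $\{v_1,\dots,v_n\}$ be an orthonormal basis of $\mathbb{R}^n$, $V=[v_1,\dots,v_n]$, and let $\lambda_1,\dots,\lambda_n,\kappa_1,\dots,\kappa_n\in\mathbb{R}$. Define the $k$th-order tensor $\mathcal A=\sum_{r=1}^n \lambda_r v_r^{\otimes k}$ and the matrix $K=\sum_{r=1}^n\kappa_r v_r v_r^\top$, and consider the closed-loop system $$\dot x = Kx+\mathcal A x^{k-1},\qquad x(t)\in\mathbb{R}^n.$$ Define the modal coordinates $y(t):=V^\top x(t)$, i.e. $y_r(t)=v_r^\top x(t)$, and $y_{r,0}:=y_r(0)=v_r^\top x(0)$. Then the dynamics decouple as $$\dot y_r=\kappa_r y_r+\lambda_r y_r^{k-1},\qquad r=1,\dots,n,$$ and the state is reconstructed by $x(t)=\sum_{r=1}^n y_r(t)v_r$. Moreover: (i) If $\kappa_r\neq 0$, then on any time interval on which $y_r(t)\neq 0$, the trajectory satisfies $$y_r(t)=y_{r,0}\Big[e^{-p\kappa_r t}-\frac{\lambda_r}{\kappa_r}\,y_{r,0}^{p}\big(1-e^{-p\kappa_r t}\big)\Big]^{-1/p},$$ valid on the maximal interval on which the bracketed term is positive. (ii) If $\kappa_r=0$, then on any time interval on which $y_r(t)\neq 0$, $$y_r(t)=y_{r,0}\big(1-p\lambda_r y_{r,0}^{p}\,t\big)^{-1/p},$$ valid on the maximal interval on which $1-p\lambda_r y_{r,0}^p t>0$.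
   Context: For $v\in\mathbb{R}^n$, $v^{\otimes k}$ is the $k$th-order tensor with entries $(v^{\otimes k})_{i_1\cdots i_k}=v_{i_1}\cdots v_{i_k}$. For a $k$th-order tensor $\mathcal A=(a_{i_1\cdots i_k})$ and $x\in\mathbb{R}^n$, $\mathcal A x^{k-1}\in\mathbb{R}^n$ is defined by $(\mathcal A x^{k-1})_i=\sum_{i_2,\dots,i_k=1}^n a_{i i_2\cdots i_k}x_{i_2}\cdots x_{i_k}$. A tensor of the form $\sum_r\lambda_r v_r^{\otimes k}$ with $\{v_r\}$ orthonormal is called orthogonally decomposable (ODECO). *)

(* Defs.v *)
From HB Require Import structures.
From mathcomp Require Import all_boot all_order all_algebra.
From mathcomp Require Import all_classical all_reals all_analysis.
Set Implicit Arguments. Unset Strict Implicit. Unset Printing Implicit Defensive.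
Import Order.TTheory GRing.Theory Num.Theory numFieldNormedType.Exports.
Local Open Scope ring_scope.

(* A tensor on R^n: entries indexed by sequences of indices (i_1,...,i_k);
   only sequences of length k (the order) are meaningful. *)
Definition tensor (R : Type) (n : nat) := seq 'I_n -> R.

Definition tpow (R : comRingType) (n : nat) (v : 'I_n -> R) : tensor R n :=
  fun idx => \prod_(j <- idx) v j.

Definition tapp (R : comRingType) (n k : nat) (A : tensor R n) (x : 'I_n -> R)
  : 'I_n -> R :=
  fun i => \sum_(t : (k.-1).-tuple 'I_n) A (i :: val t) * \prod_(j <- val t) x j.

Definition odeco (R : comRingType) (n : nat) (V : 'M[R]_n) (lam : 'I_n -> R)
  : tensor R n :=
  fun idx => \sum_(r < n) lam r * tpow (fun i => V i r) idx.

Definition Kmat (R : comRingType) (n : nat) (V : 'M[R]_n) (kap : 'I_n -> R)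
  : 'M[R]_n :=
  \sum_(r < n) kap r *: (col r V *m (col r V)^T).

Definition modal (R : comRingType) (n : nat) (V : 'M[R]_n) (x : R -> 'I_n -> R)
  (r : 'I_n) (t : R) : R :=
  \sum_(i < n) V i r * x t i.

Definition bracket_i (R : realType) (p : nat) (kap lam y0 t : R) : R :=
  expR (- (p%:R * kap * t)) - lam / kap * y0 ^+ p * (1 - expR (- (p%:R * kap * t))).

Definition bracket_ii (R : realType) (p : nat) (lam y0 t : R) : R :=
  1 - p%:R * lam * y0 ^+ p * t.

Definition bern_sol (R : realType) (p : nat) (y0 B : R) : R :=
  y0 * B `^ (- (p%:R)^-1).

(* Main.v *)
Require Import Defs.
From HB Require Import structures.
From mathcomp Require Import all_boot all_order all_algebra.
From mathcomp Require Import all_classical all_reals all_analysis.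
From mathcomp Require Import ring lra.
Import Order.TTheory GRing.Theory Num.Theory numFieldNormedType.Exports.
Local Open Scope ring_scope.
Local Open Scope classical_set_scope.


Lemma sum_tuple_prod (R : comRingType) n m (f : 'I_n -> R) :
  \sum_(t : m.-tuple 'I_n) \prod_(j <- t) f j = (\sum_j f j) ^+ m.
Proof.
elim: m => [|m IH].
  rewrite (big_pred1 [tuple]); last by move=> t /=; case: t => [[] // ?]; apply/eqP/val_inj.
  by rewrite big_nil expr0.
rewrite (reindex (fun p : 'I_n * m.-tuple 'I_n => [tuple of p.1 :: p.2])) /=; last first.
  exists (fun t : m.+1.-tuple 'I_n => (thead t, [tuple of behead t])).
    by move=> [a b] _ /=; rewrite theadE; congr pair; apply: val_inj.
  by move=> t _ /=; rewrite [RHS]tuple_eta; apply: val_inj.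
idtac.
rewrite -(pair_bigA _ (fun i (t : m.-tuple (ordinal n)) => \prod_(j0 <- i :: val t) f j0)) /=.
rewrite exprS big_distrl /=; apply: eq_bigr => i _.
rewrite -IH big_distrr /=; apply: eq_bigr => t _.
by rewrite big_cons.
Qed.


Lemma Kmat_entry (R : comNzRingType) n (V : 'M[R]_n) kap i j :
  Kmat V kap i j = \sum_s kap s * (V i s * V j s).
Proof.
rewrite /Kmat summxE; apply: eq_bigr => s _.
by rewrite !mxE big_ord1 !mxE.
Qed.

Lemma tapp_entry (R : comNzRingType) n k (V : 'M[R]_n) lam (xt : 'I_n -> R) i :
  tapp k (odeco V lam) xt i =
  \sum_s lam s * V i s * (\sum_j V j s * xt j) ^+ k.-1.
Proof.
rewrite /tapp /odeco.
under eq_bigr => t _ do rewrite big_distrl /=.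
rewrite exchange_big /=; apply: eq_bigr => s _.
rewrite -sum_tuple_prod big_distrr /=; apply: eq_bigr => t _.
rewrite /tpow big_cons.
by rewrite big_split /= !mulrA.
Qed.

Lemma stepA_alg (R : comNzRingType) n k (V : 'M[R]_n) lam kap (xt : 'I_n -> R) r :
  (forall r s, \sum_i V i r * V i s = (r == s)%:R) ->
  \sum_i V i r * (\sum_j Kmat V kap i j * xt j + tapp k (odeco V lam) xt i)
  = kap r * (\sum_i V i r * xt i) + lam r * (\sum_i V i r * xt i) ^+ k.-1.
Proof.
move=> orth.
set g := fun s => kap s * (\sum_i V i s * xt i) + lam s * (\sum_i V i s * xt i) ^+ k.-1.
have inner i : \sum_j Kmat V kap i j * xt j + tapp k (odeco V lam) xt i
   = \sum_s V i s * g s.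
  rewrite tapp_entry /g.
  under eq_bigr => j _ do rewrite Kmat_entry big_distrl /=.
  rewrite exchange_big -big_split /=; apply: eq_bigr => s _.
  rewrite mulrDr; congr (_ + _); last by rewrite mulrCA mulrA.
  rewrite big_distrr /= big_distrr /=; apply: eq_bigr => j _.
  by rewrite mulrCA !mulrA.
under eq_bigr => i _ do rewrite inner big_distrr /=.
rewrite exchange_big /=.
have e s : \sum_i V i r * (V i s * g s) = (r == s)%:R * g s.
  by rewrite -orth big_distrl /=; apply: eq_bigr => i _; rewrite mulrA.
under eq_bigr => s _ do rewrite e.
rewrite (bigD1 r) //= big1 ?addr0 ?eqxx ?mul1r //.
by move=> s /negbTE sr; rewrite eq_sym sr mul0r.
Qed.


Lemma const_ab (R : realType) (f : R -> R) (J : set R) a b :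
  is_interval J -> J a -> J b -> a < b ->
  (forall s, J s -> is_derive s 1 f 0) -> f b = f a.
Proof.
move=> iJ Ja Jb ab fd.
have inJ z : a <= z <= b -> J z by move=> hz; apply: (iJ a b).
have h1 : forall x, x \in `]a, b[%R -> is_derive x 1 f ((fun _ => 0) x).
  move=> z; rewrite in_itv /= => /andP[h1 h2]; apply: fd; apply: inJ.
  by rewrite !ltW.
have h2 : {within `[a, b], continuous f}.
  apply: continuous_in_subspaceT => z; rewrite inE /= in_itv /= => hz.
  have := fd z (inJ z hz) => -[dz _].
  exact/differentiable_continuous/derivable1_diffP.
have [c _] := @MVT R f (fun _ => 0) a b ab h1 h2.
by rewrite mul0r => /eqP; rewrite subr_eq0 => /eqP.
Qed.

Lemma const_J (R : realType) (f : R -> R) (J : set R) :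
  is_interval J -> J 0 -> (forall s, J s -> is_derive s 1 f 0) ->
  forall t, J t -> f t = f 0.
Proof.
move=> iJ J0 fd t Jt.
case: (ltgtP t 0) => [t0|t0|->] //.
  by rewrite (@const_ab _ f J t 0 iJ Jt J0 t0 fd).
exact: (@const_ab _ f J 0 t iJ J0 Jt t0 fd).
Qed.

Lemma sign_ab (R : realType) (y : R -> R) (J : set R) a b :
  is_interval J -> J a -> J b -> a <= b ->
  (forall s, J s -> {for s, continuous y}) -> (forall s, J s -> y s != 0) ->
  0 < y a * y b.
Proof.
move=> iJ Ja Jb ab yc yn.
have inJ z : a <= z <= b -> J z by move=> hz; apply: (iJ a b).
rewrite ltNge; apply/negP => hle.
have h1 : {within `[a, b], continuous y}.
  apply: continuous_in_subspaceT => z; rewrite inE /= in_itv /= => hz.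
  exact: yc (inJ z hz).
have h2 : Num.min (y a) (y b) <= 0 <= Num.max (y a) (y b).
  have ha := yn a Ja; have hb := yn b Jb.
  case: (ltrP 0 (y a)) => hya.
    have hyb : y b <= 0 by nra.
    rewrite ge_min le_max hyb /= (ltW hya) orbT //.
  have hyb : 0 <= y b.
    have hya' : y a < 0 by rewrite lt_neqAle ha hya.
    nra.
  by rewrite ge_min le_max hya hyb orbT.
have [c hc yc0] := @IVT R y a b 0 ab h1 h2.
move: hc; rewrite in_itv /= => hc.
by move: (yn c (inJ c hc)); rewrite yc0 eqxx.
Qed.

Lemma sign_J (R : realType) (y : R -> R) (J : set R) :
  is_interval J -> J 0 ->
  (forall s, J s -> {for s, continuous y}) -> (forall s, J s -> y s != 0) ->
  forall t, J t -> 0 < y t * y 0.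
Proof.
move=> iJ J0 yc yn t Jt.
case: (lerP t 0) => ht.
  exact: (@sign_ab _ y J t 0 iJ).
rewrite mulrC; apply: (@sign_ab _ y J 0 t iJ) => //; exact: ltW.
Qed.


Lemma powR_pinv (R : realType) (p : nat) (r : R) : (0 < p)%N -> 0 < r ->
  (r ^+ p) `^ (- (p%:R)^-1) = r^-1.
Proof.
move=> p0 r0.
rewrite -powR_mulrn ?ltW // -powRrM mulrN divff ?powR_inv1 ?ltW //.
by rewrite pnatr_eq0 -lt0n.
Qed.

Lemma final_step (R : realType) (p : nat) (y0 yt B : R) : (0 < p)%N ->
  0 < yt * y0 -> (y0 / yt) ^+ p = B -> 0 < B /\ yt = bern_sol p y0 B.
Proof.
move=> p0 h hB.
have y0n : y0 != 0 by apply: contraTneq h => ->; rewrite mulr0 ltxx.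
have ytn : yt != 0 by apply: contraTneq h => ->; rewrite mul0r ltxx.
have r0 : 0 < y0 / yt.
  have -> : y0 / yt = (yt * y0) / (yt ^+ 2) by field.
  by apply: divr_gt0 => //; rewrite exprn_even_gt0.
split; first by rewrite -hB exprn_gt0.
by rewrite /bern_sol -hB powR_pinv // invf_div mulrC divfK.
Qed.

Set Implicit Arguments. Unset Strict Implicit.

Section D.
Variable R : realType.
Implicit Types (f g : R -> R) (x df dg c d a : R).

Lemma dd_pow f x df n : is_derive x 1 f df ->
  is_derive x 1 (fun s => f s ^+ n) (n%:R * f x ^+ n.-1 * df).
Proof. by move=> h; have := is_deriveX n h; rewrite exprfctE. Qed.

Lemma dd_mul f g x df dg : is_derive x 1 f df -> is_derive x 1 g dg ->
  is_derive x 1 (fun s => f s * g s) (f x * dg + g x * df).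
Proof. by move=> h1 h2; have := is_deriveM h1 h2; rewrite mulrfctE. Qed.

Lemma dd_add f g x df dg : is_derive x 1 f df -> is_derive x 1 g dg ->
  is_derive x 1 (fun s => f s + g s) (df + dg).
Proof. by move=> h1 h2; have := is_deriveD h1 h2; rewrite addrfctE. Qed.

Lemma dd_sub f g x df dg : is_derive x 1 f df -> is_derive x 1 g dg ->
  is_derive x 1 (fun s => f s - g s) (df - dg).
Proof. by move=> h1 h2; have := is_deriveB h1 h2; rewrite fctE. Qed.

Lemma dd_inv f x df : f x != 0 -> is_derive x 1 f df ->
  is_derive x 1 (fun s => (f s)^-1) (- df / f x ^+ 2).
Proof.
move=> h1 h2; have := is_deriveV h1 h2.
by rewrite /GRing.scale /= mulNr mulrC -mulNr.
Qed.

Lemma dd_cst x c : is_derive x 1 (fun _ : R => c) 0.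
Proof. exact: is_derive_cst. Qed.

Lemma dd_id x : is_derive x 1 (fun s : R => s) 1.
Proof. exact: is_derive_id. Qed.

Lemma dd_exp f x df : is_derive x 1 f df ->
  is_derive x 1 (fun s => expR (f s)) (expR (f x) * df).
Proof. by move=> h; have := is_derive1_comp (is_derive_expR (f x)) h. Qed.

Lemma dd_powR f x df a : 0 < f x -> is_derive x 1 f df ->
  is_derive x 1 (fun s => f s `^ a) (a * f x `^ (a - 1) * df).
Proof. by move=> h0 h; have := is_derive1_comp (is_derive1_powR a h0) h. Qed.
Lemma dd_cont f x df : is_derive x 1 f df -> {for x, continuous f}.
Proof. by case=> d _; exact/differentiable_continuous/derivable1_diffP. Qed.
Lemma dd_opp f x df : is_derive x 1 f df ->
  is_derive x 1 (fun s => - f s) (- df).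
Proof. by move=> h; have := is_deriveN h; rewrite fctE. Qed.
End D.

Unset Implicit Arguments. Set Strict Implicit.


Lemma case_i (R : realType) (q : nat) (ka la : R) (y : R -> R) (J : set R) :
  ka != 0 -> is_interval J -> J 0 ->
  (forall s, J s -> is_derive s 1 y (ka * y s + la * y s ^+ q.+2)) ->
  (forall s, J s -> y s != 0) ->
  forall t, J t -> 0 < bracket_i q.+1 ka la (y 0) t /\
    y t = bern_sol q.+1 (y 0) (bracket_i q.+1 ka la (y 0) t).
Proof.
move=> k0 iJ J0 yd yn t Jt.
set p := q.+1.
set c := p%:R * ka.
pose F s := expR (c * s) * ((y s ^+ p)^-1 + la / ka).
have Fd s : J s -> is_derive s 1 F 0.
  move=> Js.
  have ys := yn s Js.
  have h1 := dd_exp (dd_mul (dd_cst s c) (dd_id s)).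
  have h3 := dd_pow p (yd s Js).
  have h4 := dd_inv (f := fun s => y s ^+ p) (expf_neq0 p ys) h3.
  have h2 := dd_add h4 (dd_cst s (la / ka)).
  apply: is_derive_eq (dd_mul h1 h2) _.
  rewrite /c /p /= !exprS expr0 mulr1.
  have yq : y s ^+ q != 0 by rewrite expf_neq0.
  move: yq; move: (y s ^+ q) (expR _) ys => Q E ys yq.
  field.
  by rewrite ys yq k0.
have hF := @const_J _ F J iJ J0 Fd t Jt.
have hs := @sign_J _ y J iJ J0 (fun s Js => dd_cont (yd s Js)) yn t Jt.
apply: final_step => //.
set E := expR (c * t).
have E0 : E != 0 by rewrite gt_eqF // expR_gt0.
have hA : (y t ^+ p)^-1 = ((y 0 ^+ p)^-1 + la / ka) / E - la / ka.
  move: hF; rewrite /F mulr0 expR0 mul1r => <-; rewrite /E; field.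
  by rewrite k0 -/E E0 expf_neq0 // yn.
rewrite /bracket_i -/c expRN -/E exprMn exprVn hA.
have y0p : y 0 ^+ p != 0 by rewrite expf_neq0 // yn.
move: y0p; move: (y 0 ^+ p) => Y y0p.
field.
by rewrite E0 k0 y0p.
Qed.


Lemma powR_pinv2 (R : realType) (p : nat) (B : R) : (0 < p)%N -> 0 < B ->
  (B `^ (- (p%:R)^-1)) ^+ p = B^-1.
Proof.
move=> p0 B0.
rewrite -powR_mulrn ?powR_ge0 // -powRrM mulNr mulVf ?powR_inv1 ?ltW //.
by rewrite pnatr_eq0 -lt0n.
Qed.

Lemma powR_m1 (R : realType) (a B : R) : 0 < B -> B `^ (a - 1) = B `^ a / B.
Proof.
move=> B0; rewrite powRB ?powRr1 ?ltW //.
by apply/implyP => _; rewrite gt_eqF.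
Qed.

Lemma der_i (R : realType) (q : nat) (ka la y0 t : R) : ka != 0 ->
  0 < bracket_i q.+1 ka la y0 t ->
  is_derive t 1 (fun s => bern_sol q.+1 y0 (bracket_i q.+1 ka la y0 s))
    (ka * bern_sol q.+1 y0 (bracket_i q.+1 ka la y0 t)
     + la * bern_sol q.+1 y0 (bracket_i q.+1 ka la y0 t) ^+ q.+2).
Proof.
move=> k0 B0.
set c := q.+1%:R * ka.
have hin := dd_opp (dd_mul (dd_cst t c) (dd_id t)).
have hE := dd_exp hin.
have hB := dd_sub hE (dd_mul (dd_cst t (la / ka * y0 ^+ q.+1)) (dd_sub (dd_cst t 1) hE)).
have hP := dd_mul (dd_cst t y0) (dd_powR (- (q.+1%:R)^-1) B0 hB).
rewrite /bern_sol.
apply: is_derive_eq hP _.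
rewrite powR_m1 // exprMn (exprS (_ `^ _) q.+1) powR_pinv2 // (exprS y0 q.+1).
move: B0; rewrite /bracket_i -/c => B0.
have Bn := lt0r_neq0 B0.
set Ba := _ `^ _.
clearbody Ba; clear hB hE hin B0.
have P0 : q.+1%:R != 0 :> R by rewrite pnatr_eq0.
move: Bn P0; rewrite /c; move: (expR _) => E; move: (y0 ^+ q.+1) => Y. move: (q.+1%:R) => P Bn P0.
field.
have -> : E * ka - la * Y * (1 - E) = ka * (E - la / ka * Y * (1 - E)) by field.
by rewrite k0 mulf_neq0.
Qed.

Lemma der_ii (R : realType) (q : nat) (la y0 t : R) :
  0 < bracket_ii q.+1 la y0 t ->
  is_derive t 1 (fun s => bern_sol q.+1 y0 (bracket_ii q.+1 la y0 s))
    (la * bern_sol q.+1 y0 (bracket_ii q.+1 la y0 t) ^+ q.+2).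
Proof.
move=> B0.
have hB := dd_sub (dd_cst t 1) (dd_mul (dd_cst t (q.+1%:R * la * y0 ^+ q.+1)) (dd_id t)).
have hP := dd_mul (dd_cst t y0) (dd_powR (- (q.+1%:R)^-1) B0 hB).
rewrite /bern_sol.
apply: is_derive_eq hP _.
rewrite powR_m1 // exprMn (exprS (_ `^ _) q.+1) powR_pinv2 // (exprS y0 q.+1).
move: B0; rewrite /bracket_ii => B0.
have Bn := lt0r_neq0 B0.
set Ba := _ `^ _.
clearbody Ba; clear hB B0.
have P0 : q.+1%:R != 0 :> R by rewrite pnatr_eq0.
move: Bn P0; move: (y0 ^+ q.+1) => Y. move: (q.+1%:R) => P Bn P0.
field.
by rewrite Bn P0.
Qed.

Lemma case_ii (R : realType) (q : nat) (ka la : R) (y : R -> R) (J : set R) :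
  ka = 0 -> is_interval J -> J 0 ->
  (forall s, J s -> is_derive s 1 y (ka * y s + la * y s ^+ q.+2)) ->
  (forall s, J s -> y s != 0) ->
  forall t, J t -> 0 < bracket_ii q.+1 la (y 0) t /\
    y t = bern_sol q.+1 (y 0) (bracket_ii q.+1 la (y 0) t).
Proof.
move=> k0 iJ J0 yd yn t Jt.
set p := q.+1.
pose F s := (y s ^+ p)^-1 + p%:R * la * s.
have Fd s : J s -> is_derive s 1 F 0.
  move=> Js.
  have ys := yn s Js.
  have h1 := dd_mul (dd_cst s (p%:R * la)) (dd_id s).
  have h3 := dd_pow p (yd s Js).
  have h4 := dd_inv (f := fun s => y s ^+ p) (expf_neq0 p ys) h3.
  have h2 := dd_add h4 h1.
  apply: is_derive_eq h2 _.
  rewrite k0 /p /= !exprS expr0 mulr1.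
  have yq : y s ^+ q != 0 by rewrite expf_neq0.
  move: yq; move: (y s ^+ q) ys => Q ys yq.
  field.
  by rewrite ys yq.
have hF := @const_J _ F J iJ J0 Fd t Jt.
have hs := @sign_J _ y J iJ J0 (fun s Js => dd_cont (yd s Js)) yn t Jt.
apply: final_step => //.
have hA : (y t ^+ p)^-1 = (y 0 ^+ p)^-1 - p%:R * la * t.
  move: hF; rewrite /F mulr0 addr0 => <-; ring.
rewrite /bracket_ii exprMn exprVn hA.
have y0p : y 0 ^+ p != 0 by rewrite expf_neq0 // yn.
move: y0p; move: (y 0 ^+ p) => Y y0p.
field.
by rewrite y0p.
Qed.

Theorem theorem1 (R : realType) (n k : nat) (V : 'M[R]_n)
  (lam kap : 'I_n -> R) (I : set R) (x : R -> 'I_n -> R) :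
  (1 <= n)%N -> (3 <= k)%N ->
  V^T *m V = 1%:M ->
  is_interval I -> open I -> I 0 ->
  (forall t, I t -> forall i,
      is_derive t 1 (fun s => x s i)
        (\sum_(j < n) Kmat V kap i j * x t j + tapp k (odeco V lam) (x t) i)) ->
  [/\ (forall r t, I t ->
         is_derive t 1 (modal V x r)
           (kap r * modal V x r t + lam r * modal V x r t ^+ (k - 1))),
      (forall t i, x t i = \sum_(r < n) modal V x r t * V i r),
      (forall r, kap r != 0 ->
         (forall J : set R, J `<=` I -> is_interval J -> J 0 ->
            (forall t, J t -> modal V x r t != 0) ->
            forall t, J t ->
              0 < bracket_i (k - 2) (kap r) (lam r) (modal V x r 0) t /\
              modal V x r t = bern_sol (k - 2) (modal V x r 0)
                 (bracket_i (k - 2) (kap r) (lam r) (modal V x r 0) t)) /\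
         (forall t, (forall s, Num.min 0 t <= s <= Num.max 0 t ->
                      0 < bracket_i (k - 2) (kap r) (lam r) (modal V x r 0) s) ->
            is_derive t 1
              (fun s => bern_sol (k - 2) (modal V x r 0)
                 (bracket_i (k - 2) (kap r) (lam r) (modal V x r 0) s))
              (kap r * bern_sol (k - 2) (modal V x r 0)
                 (bracket_i (k - 2) (kap r) (lam r) (modal V x r 0) t)
               + lam r * bern_sol (k - 2) (modal V x r 0)
                 (bracket_i (k - 2) (kap r) (lam r) (modal V x r 0) t) ^+ (k - 1))))
    & (forall r, kap r = 0 ->
         (forall J : set R, J `<=` I -> is_interval J -> J 0 ->
            (forall t, J t -> modal V x r t != 0) ->
            forall t, J t ->
              0 < bracket_ii (k - 2) (lam r) (modal V x r 0) t /\
              modal V x r t = bern_sol (k - 2) (modal V x r 0)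
                 (bracket_ii (k - 2) (lam r) (modal V x r 0) t)) /\
         (forall t, (forall s, Num.min 0 t <= s <= Num.max 0 t ->
                      0 < bracket_ii (k - 2) (lam r) (modal V x r 0) s) ->
            is_derive t 1
              (fun s => bern_sol (k - 2) (modal V x r 0)
                 (bracket_ii (k - 2) (lam r) (modal V x r 0) s))
              (lam r * bern_sol (k - 2) (modal V x r 0)
                 (bracket_ii (k - 2) (lam r) (modal V x r 0) t) ^+ (k - 1))))].
Proof.
move=> n1 k3 HV iI oI I0 xd.
have orth r s : \sum_i V i r * V i s = (r == s)%:R.
  have := congr1 (fun M : 'M[R]_n => M r s) HV; rewrite !mxE => <-.
  by apply: eq_bigr => i _; rewrite mxE.
have orth2 i j : \sum_r V i r * V j r = (i == j)%:R.
  have := congr1 (fun M : 'M[R]_n => M i j) (mulmx1C HV); rewrite !mxE => <-.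
  by apply: eq_bigr => r _; rewrite mxE.
have dA r t : I t ->
    is_derive t 1 (modal V x r)
      (kap r * modal V x r t + lam r * modal V x r t ^+ (k - 1)).
  move=> It.
  have h := is_derive_sum (fun i => dd_mul (dd_cst t (V i r)) (xd t It i)).
  have e : modal V x r = \sum_i (fun s => V i r * x s i).
    by rewrite fct_sumE; apply/funext => s.
  rewrite -e in h.
  apply: is_derive_eq h _.
  rewrite subn1 /modal -stepA_alg //; apply: eq_bigr => i _.
  by rewrite mulr0 addr0.
case: k k3 xd dA => [|[|[|q]]] // _ xd dA.
have e1 : (q.+3 - 1 = q.+2)%N by [].
have e2 : (q.+3 - 2 = q.+1)%N by [].
rewrite e1 e2 in dA *.
split => //.
- move=> t i; rewrite /modal.
  under eq_bigr => r _ do rewrite big_distrl /=.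
  rewrite exchange_big /=.
  have e j : \sum_r V j r * x t j * V i r = (i == j)%:R * x t j.
    rewrite -orth2 big_distrl /=; apply: eq_bigr => r _.
    by rewrite mulrAC [V j r * _]mulrC.
  under eq_bigr => j _ do rewrite e.
  rewrite (bigD1 i) //= big1 ?addr0 ?eqxx ?mul1r //.
  by move=> j /negbTE ji; rewrite eq_sym ji mul0r.
- move=> r kr; split.
    move=> J JI iJ J0 yn t Jt.
    apply: (@case_i R q (kap r) (lam r) (modal V x r) J) => //.
    by move=> s Js; apply: dA; apply: JI.
  move=> t hB; apply: der_i => //; apply: hB.
  by rewrite ge_min le_max lexx !orbT.
- move=> r kr; split.
    move=> J JI iJ J0 yn t Jt.
    apply: (@case_ii R q (kap r) (lam r) (modal V x r) J) => //.
    by move=> s Js; apply: dA; apply: JI.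
  move=> t hB; apply: der_ii => //; apply: hB.
  by rewrite ge_min le_max lexx !orbT.
Qed.
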